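(* Let $\mathcal Z,\mathcal S$ be finite, $f:\mathcal Z\times\mathcal S\to\mathbb R$, and $(Z_i,S_i)$, $i=1,\dots,n$, random variables with a common joint law $P_{ZS}$ (not depending on $i$) such that $\Pr[\mathbf S=\mathbf s\mid\mathbf Z=\mathbf z]=\prod_{i=1}^n\Pr[S_i=s_i\mid Z_i=z_i]$. Let $P_{S|Z}$ be the conditional of $P_{ZS}$. Then for every type $p$ with $\Pr[\hat p_{\mathbf Z}=p]>0$, $$\operatorname{Var}\Big[\sum_{i=1}^n f(Z_i,S_i)\ \Big|\ \hat p_{\mathbf Z}=p\Big]=n\,\mathbb E_{p}\Big[\operatorname{Var}_{P_{S|Z}}[f(\tilde Z,S)\mid\tilde Z]\Big],$$ where $\tilde Z\sim p$ and, given $\tilde Z$, $S\sim P_{S|Z}(\cdot|\tilde Z)$.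
   Context: $\mathbf Z=(Z_1,\dots,Z_n)$, $\mathbf S=(S_1,\dots,S_n)$; $\hat p_{\mathbf Z}$ is the empirical distribution (type) of $\mathbf Z$. *)

(* Defs.v *)
(* Finite discrete probability: the joint law of
   (Z_1..Z_n, S_1..S_n) is a pmf Q on the finite sample space
   {ffun 'I_n -> Z} * {ffun 'I_n -> S}. *)
From mathcomp Require Import all_boot all_order all_algebra.
From mathcomp Require Import reals.
Set Implicit Arguments. Unset Strict Implicit. Unset Printing Implicit Defensive.
Import Order.TTheory GRing.Theory Num.Theory.
Local Open Scope ring_scope.

Section Defs.
Variables (R : realType) (Z S : finType) (n : nat).

Definition sample := ({ffun 'I_n -> Z} * {ffun 'I_n -> S})%type.

Definition is_pmf (T : finType) (Q : {ffun T -> R}) : Prop :=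
  (forall w, 0 <= Q w) /\ \sum_w Q w = 1.

Definition probZ (Q : {ffun sample -> R}) (z : {ffun 'I_n -> Z}) : R :=
  \sum_(s : {ffun 'I_n -> S}) Q (z, s).

Definition marg (Q : {ffun sample -> R}) (i : 'I_n) (a : Z) (b : S) : R :=
  \sum_(w : sample | (w.1 i == a) && (w.2 i == b)) Q w.

Definition margZ (Q : {ffun sample -> R}) (i : 'I_n) (a : Z) : R :=
  \sum_(b : S) marg Q i a b.

Definition cond_indep (Q : {ffun sample -> R}) : Prop :=
  forall z s, 0 < probZ Q z ->
    Q (z, s) / probZ Q z = \prod_(i < n) (marg Q i (z i) (s i) / margZ Q i (z i)).

Definition emp (z : {ffun 'I_n -> Z}) : {ffun Z -> R} :=
  [ffun a => #|[set i | z i == a]|%:R / n%:R].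

Definition prob (Q : {ffun sample -> R}) (E : pred sample) : R :=
  \sum_(w | E w) Q w.

Definition cexp (Q : {ffun sample -> R}) (E : pred sample) (X : sample -> R) : R :=
  (\sum_(w | E w) Q w * X w) / prob Q E.

Definition cvar (Q : {ffun sample -> R}) (E : pred sample) (X : sample -> R) : R :=
  cexp Q E (fun w => (X w - cexp Q E X) ^+ 2).

End Defs.

Section PSZ.
Variables (R : realType) (Z S : finType).

Definition PZ (PZS : {ffun Z * S -> R}) (a : Z) : R := \sum_b PZS (a, b).
Definition PSgZ (PZS : {ffun Z * S -> R}) (a : Z) (b : S) : R := PZS (a, b) / PZ PZS a.

Definition cmeanSZ (PZS : {ffun Z * S -> R}) (f : Z -> S -> R) (a : Z) : R :=
  \sum_b PSgZ PZS a b * f a b.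
Definition cvarSZ (PZS : {ffun Z * S -> R}) (f : Z -> S -> R) (a : Z) : R :=
  \sum_b PSgZ PZS a b * (f a b - cmeanSZ PZS f a) ^+ 2.
End PSZ.

(* Main.v *)
Require Import Defs.
From mathcomp Require Import all_boot all_order all_algebra.
From mathcomp Require Import reals.
Import Order.TTheory GRing.Theory Num.Theory.
Local Open Scope ring_scope.
Set Implicit Arguments. Unset Strict Implicit.

Lemma prod_sum (R : realType) (S : finType) (n : nat) (q G : 'I_n -> S -> R) :
  \sum_(s : {ffun 'I_n -> S}) (\prod_k q k (s k)) * \prod_k G k (s k)
  = \prod_k \sum_b q k b * G k b.
Proof.
rewrite bigA_distr_bigA /=; apply: eq_bigr => s _.
by rewrite -big_split.
Qed.

Definition G1 (R : realType) (S : finType) (n : nat) (i : 'I_n) (g : S -> R) :=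
  fun (k : 'I_n) (b : S) => if k == i then g b else 1.
Arguments G1 {R S n}.
Definition G2 (R : realType) (S : finType) (n : nat) (i j : 'I_n) (g h : S -> R) :=
  fun (k : 'I_n) (b : S) => if k == i then g b else if k == j then h b else 1.

Arguments G2 {R S n}.

Lemma E1 (R : realType) (S : finType) (n : nat) (q : 'I_n -> S -> R)
  (hq : forall k, \sum_b q k b = 1) (i : 'I_n) (g : S -> R) :
  \sum_(s : {ffun 'I_n -> S}) (\prod_k q k (s k)) * g (s i)
  = \sum_b q i b * g b.
Proof.
have -> : \sum_(s : {ffun 'I_n -> S}) (\prod_k q k (s k)) * g (s i)
  = \sum_(s : {ffun 'I_n -> S}) (\prod_k q k (s k)) * \prod_k G1 i g k (s k).
  apply: eq_bigr => s _; congr (_ * _).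
  rewrite (bigD1 i) //= /G1 eqxx big1 ?mulr1 // => k /negbTE ->; done.
rewrite prod_sum (bigD1 i) //= /G1 eqxx.
rewrite [X in _ * X]big1 ?mulr1 // => k /negbTE ->.
by under eq_bigr do rewrite mulr1.
Qed.

Lemma E2 (R : realType) (S : finType) (n : nat) (q : 'I_n -> S -> R)
  (hq : forall k, \sum_b q k b = 1) (i j : 'I_n) (g h : S -> R) : i != j ->
  \sum_(s : {ffun 'I_n -> S}) (\prod_k q k (s k)) * (g (s i) * h (s j))
  = (\sum_b q i b * g b) * (\sum_b q j b * h b).
Proof.
move=> nij.
have nji : (j == i) = false by rewrite eq_sym; apply/negbTE.
have -> : \sum_(s : {ffun 'I_n -> S}) (\prod_k q k (s k)) * (g (s i) * h (s j))
  = \sum_(s : {ffun 'I_n -> S}) (\prod_k q k (s k)) * \prod_k G2 i j g h k (s k).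
  apply: eq_bigr => s _; congr (_ * _).
  rewrite (bigD1 i) //= /G2 eqxx (bigD1 j) //= ?nji ?eqxx // big1 ?mulr1 //.
  by move=> k /andP[/negbTE -> /negbTE ->].
rewrite prod_sum (bigD1 i) //= /G2 eqxx (bigD1 j) //= ?nji ?eqxx //.
rewrite [X in _ * (_ * X)]big1 ?mulr1 //.
move=> k /andP[/negbTE -> /negbTE ->].
by under eq_bigr do rewrite mulr1.
Qed.

Lemma margZ_PZ (R : realType) (Z S : finType) (n : nat) (PZS : {ffun Z * S -> R})
  (Q : {ffun sample Z S n -> R}) :
  (forall (i : 'I_n) a b, marg Q i a b = PZS (a, b)) ->
  forall i a, margZ Q i a = PZ PZS a.
Proof. by move=> hm i a; apply: eq_bigr => b _; rewrite hm. Qed.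

Lemma probZ_ge0 (R : realType) (Z S : finType) (n : nat)
  (Q : {ffun sample Z S n -> R}) : is_pmf Q -> forall z, 0 <= probZ Q z.
Proof. by move=> [h0 _] z; apply: sumr_ge0 => s _. Qed.

Lemma Qfactor (R : realType) (Z S : finType) (n : nat) (PZS : {ffun Z * S -> R})
  (Q : {ffun sample Z S n -> R}) :
  (forall (i : 'I_n) a b, marg Q i a b = PZS (a, b)) -> cond_indep Q ->
  forall z, 0 < probZ Q z -> forall s,
  Q (z, s) = probZ Q z * \prod_k PSgZ PZS (z k) (s k).
Proof.
move=> hm hci z hz s; have h := hci z s hz.
have -> : \prod_k PSgZ PZS (z k) (s k) = Q (z, s) / probZ Q z.
  by rewrite h; apply: eq_bigr => k _; rewrite (margZ_PZ hm) hm.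
 rewrite mulrC divfK //; exact: lt0r_neq0.
Qed.

Lemma qsum1 (R : realType) (Z S : finType) (n : nat) (PZS : {ffun Z * S -> R})
  (Q : {ffun sample Z S n -> R}) :
  (forall (i : 'I_n) a b, marg Q i a b = PZS (a, b)) -> cond_indep Q ->
  forall z, 0 < probZ Q z -> forall k,
  \sum_b PSgZ PZS (z k) b = 1.
Proof.
move=> hm hci z hz.
have hp : \prod_k \sum_b PSgZ PZS (z k) b = 1.
  have : probZ Q z = probZ Q z * \prod_k \sum_b PSgZ PZS (z k) b.
    have h : \sum_(s : {ffun 'I_n -> S}) \prod_k PSgZ PZS (z k) (s k)
      = \prod_k \sum_b PSgZ PZS (z k) b.
      have := prod_sum (fun k b => PSgZ PZS (z k) b) (fun _ _ => 1).
      rewrite (eq_bigr (fun s : {ffun 'I_n -> S} => \prod_k PSgZ PZS (z k) (s k))); last first.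
        by move=> s _; rewrite big1_eq mulr1.
      move=> ->; apply: eq_bigr => k _; apply: eq_bigr => b _; by rewrite mulr1.
    rewrite -h mulr_sumr {1}/probZ.
    by apply: eq_bigr => s _; rewrite (Qfactor hm hci hz).
  move=> e; apply: (mulfI (lt0r_neq0 hz)); by rewrite mulr1 -e.
have e : forall k, \sum_b PSgZ PZS (z k) b = PZ PZS (z k) / PZ PZS (z k).
  by move=> k; rewrite /PSgZ -mulr_suml.
move=> k; rewrite e.
have [h0|h0] := eqVneq (PZ PZS (z k)) 0; last by rewrite divff.
exfalso; move: hp; have /prodf_eq0 : exists2 i, true & \sum_b PSgZ PZS (z i) b == 0.
  by exists k => //; rewrite e h0 mul0r.
by move=> /eqP -> /eqP; rewrite eq_sym oner_eq0.
Qed.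

Lemma perz (R : realType) (Z S : finType) (n : nat) (PZS : {ffun Z * S -> R})
  (Q : {ffun sample Z S n -> R}) :
  is_pmf Q ->
  (forall (i : 'I_n) a b, marg Q i a b = PZS (a, b)) -> cond_indep Q ->
  forall z (phi : {ffun 'I_n -> S} -> R) c,
  (0 < probZ Q z -> \sum_(s : {ffun 'I_n -> S}) (\prod_k PSgZ PZS (z k) (s k)) * phi s = c) ->
  \sum_s Q (z, s) * phi s = probZ Q z * c.
Proof.
move=> hpm hm hci z phi c hc.
have := probZ_ge0 hpm z; rewrite le0r => /orP[/eqP h0|hz].
  rewrite h0 mul0r big1 // => s _.
  have -> : Q (z, s) = 0; last by rewrite mul0r.
  by apply: (psumr_eq0P _ h0) => // s' _; case: hpm.
rewrite -(hc hz) mulr_sumr; apply: eq_bigr => s _.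
by rewrite (Qfactor hm hci hz) mulrA.
Qed.

Lemma Emean (R : realType) (Z S : finType) (n : nat) (f : Z -> S -> R)
  (PZS : {ffun Z * S -> R}) (z : {ffun 'I_n -> Z}) :
  (forall k, \sum_b PSgZ PZS (z k) b = 1) ->
  \sum_(s : {ffun 'I_n -> S}) (\prod_k PSgZ PZS (z k) (s k)) * \sum_i f (z i) (s i)
  = \sum_i cmeanSZ PZS f (z i).
Proof.
move=> hq.
under eq_bigr do rewrite mulr_sumr.
rewrite exchange_big /=; apply: eq_bigr => i _.
rewrite /cmeanSZ; exact: (E1 hq i (f (z i))).
Qed.

Lemma Evar (R : realType) (Z S : finType) (n : nat) (f : Z -> S -> R)
  (PZS : {ffun Z * S -> R}) (z : {ffun 'I_n -> Z}) :
  (forall k, \sum_b PSgZ PZS (z k) b = 1) ->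
  \sum_(s : {ffun 'I_n -> S}) (\prod_k PSgZ PZS (z k) (s k)) *
     (\sum_i f (z i) (s i) - \sum_i cmeanSZ PZS f (z i)) ^+ 2
  = \sum_i cvarSZ PZS f (z i).
Proof.
move=> hq.
set q := fun k b => PSgZ PZS (z k) b.
set Y := fun (i : 'I_n) b => f (z i) b - cmeanSZ PZS f (z i).
have EY : forall i, \sum_b q i b * Y i b = 0.
  move=> i; rewrite /Y; under eq_bigr do rewrite mulrBr.
  rewrite sumrB -mulr_suml hq mul1r /cmeanSZ /q; exact: subrr.
have -> : \sum_(s : {ffun 'I_n -> S}) (\prod_k PSgZ PZS (z k) (s k)) *
     (\sum_i f (z i) (s i) - \sum_i cmeanSZ PZS f (z i)) ^+ 2
  = \sum_i \sum_j \sum_(s : {ffun 'I_n -> S}) (\prod_k q k (s k)) * (Y i (s i) * Y j (s j)).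
  symmetry. under eq_bigr do rewrite exchange_big /=.
  rewrite exchange_big /=; apply: eq_bigr => s _.
  under eq_bigr do rewrite -mulr_sumr.
  rewrite -mulr_sumr; congr (_ * _).
  rewrite -sumrB expr2 big_distrlr /=; apply: eq_bigr => i _.
  by apply: eq_bigr => j _.
apply: eq_bigr => i _.
rewrite (bigD1 i) //= [X in _ + X]big1 ?addr0.
  transitivity (\sum_b q i b * (Y i b * Y i b)).
    exact: (E1 (q:=q) hq i (fun b => Y i b * Y i b)).
  rewrite /cvarSZ.
  by apply: eq_bigr => b _; rewrite expr2.
move=> j nji; rewrite (E2 (q:=q) hq); last by rewrite eq_sym.
by rewrite (EY j) mulr0.
Qed.

Lemma card_emp (R : realType) (Z : finType) (n : nat) (z : {ffun 'I_n -> Z}) a :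
  (#|[set i | z i == a]|)%:R = n%:R * emp R z a :> R.
Proof.
rewrite /emp ffunE; case: n z => [|m] z.
  have -> : #|[set i | z i == a]| = 0%N.
    apply/eqP; rewrite -leqn0; apply: leq_trans (max_card _) _; by rewrite card_ord.
  by rewrite mul0r.
by rewrite mulrCA divff ?mulr1 // pnatr_eq0.
Qed.

Lemma count_sum (R : realType) (Z : finType) (n : nat) (z : {ffun 'I_n -> Z}) (g : Z -> R) :
  \sum_i g (z i) = \sum_a (n%:R * emp R z a) * g a.
Proof.
have -> : \sum_i g (z i) = \sum_i \sum_a (if z i == a then g a else 0).
  apply: eq_bigr => i _; rewrite -big_mkcond (big_pred1 (z i)) //.
rewrite exchange_big /=; apply: eq_bigr => a _.
rewrite -big_mkcond -card_emp /=.
rewrite (eq_bigl (fun i => i \in [set i | z i == a])); last by move=> i; rewrite inE.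
by rewrite sumr_const mulr_natl.
Qed.

Lemma split_sum (R : realType) (Z S : finType) (n : nat) (Q : {ffun sample Z S n -> R})
  (p : {ffun Z -> R}) (phi : sample Z S n -> R) :
  \sum_(w | emp R w.1 == p) Q w * phi w
  = \sum_(z | emp R z == p) \sum_s Q (z, s) * phi (z, s).
Proof.
rewrite big_mkcond [RHS]big_mkcond /=.
have -> : \sum_(z : {ffun 'I_n -> Z}) (if emp R z == p then \sum_(s : {ffun 'I_n -> S}) Q (z, s) * phi (z, s) else 0)
  = \sum_(z : {ffun 'I_n -> Z}) \sum_(s : {ffun 'I_n -> S}) (if emp R z == p then Q (z, s) * phi (z, s) else 0).
  apply: eq_bigr => z _; case: ifP => _ //.
  by rewrite big1.
rewrite [LHS](eq_bigr (fun w : sample Z S n => if emp R w.1 == p then Q (w.1, w.2) * phi (w.1, w.2) else 0)); last by move=> [? ?].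
rewrite (pair_bigA _ (fun z s => if emp R z == p then Q (z, s) * phi (z, s) else 0)) /=.
reflexivity.
Qed.

Unset Implicit Arguments. Set Strict Implicit.

Theorem corollary4 (R : realType) (Z S : finType) (n : nat)
  (f : Z -> S -> R) (PZS : {ffun Z * S -> R})
  (Q : {ffun sample Z S n -> R}) :
  is_pmf Q ->
  (forall (i : 'I_n) a b, marg Q i a b = PZS (a, b)) ->
  cond_indep Q ->
  forall p : {ffun Z -> R},
    0 < prob Q (fun w => emp R w.1 == p) ->
    cvar Q (fun w => emp R w.1 == p) (fun w => \sum_(i < n) f (w.1 i) (w.2 i))
    = n%:R * \sum_(a : Z) p a * cvarSZ PZS f a.
Proof.
move=> hpm hm hci p hP.
have key : forall z : {ffun 'I_n -> Z}, emp R z == p -> forall g : Z -> R,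
    \sum_i g (z i) = n%:R * \sum_a p a * g a.
  move=> z /eqP ez g; rewrite count_sum ez mulr_sumr.
  by apply: eq_bigr => a _; rewrite mulrA.
have hprob : prob Q (fun w => emp R w.1 == p) = \sum_(z | emp R z == p) probZ Q z.
  rewrite /prob.
  have -> : \sum_(w | emp R w.1 == p) Q w = \sum_(w | emp R w.1 == p) Q w * 1.
    by apply: eq_bigr => w _; rewrite mulr1.
  rewrite split_sum; apply: eq_bigr => z _; rewrite /probZ.
  by apply: eq_bigr => s _; rewrite mulr1.
have nz : prob Q (fun w => emp R w.1 == p) != 0 by exact: lt0r_neq0.
have hmean : cexp Q (fun w => emp R w.1 == p) (fun w => \sum_(i < n) f (w.1 i) (w.2 i))
    = n%:R * \sum_a p a * cmeanSZ PZS f a.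
  rewrite /cexp split_sum.
  have -> : \sum_(z | emp R z == p) \sum_s Q (z, s) * \sum_(i < n) f ((z, s).1 i) ((z, s).2 i)
     = \sum_(z | emp R z == p) probZ Q z * (n%:R * \sum_a p a * cmeanSZ PZS f a).
    apply: eq_bigr => z ez.
    apply: (perz hpm hm hci (z:=z) (phi:=fun s => \sum_(i < n) f (z i) (s i))) => hz.
    by rewrite (Emean f (qsum1 hm hci hz)) (key z ez).
  by rewrite -mulr_suml -hprob mulrAC divff // mul1r.
rewrite /cvar hmean /cexp split_sum.
have -> : \sum_(z | emp R z == p) \sum_s Q (z, s) *
     (\sum_(i < n) f ((z, s).1 i) ((z, s).2 i) - n%:R * \sum_a p a * cmeanSZ PZS f a) ^+ 2
   = \sum_(z | emp R z == p) probZ Q z * (n%:R * \sum_a p a * cvarSZ PZS f a).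
  apply: eq_bigr => z ez.
  apply: (perz hpm hm hci (z:=z) (phi:=fun s => (\sum_(i < n) f (z i) (s i)
            - n%:R * \sum_a p a * cmeanSZ PZS f a) ^+ 2)) => hz.
  rewrite -(key z ez (cmeanSZ PZS f)) (Evar f (qsum1 hm hci hz)).
  exact: key.
by rewrite -mulr_suml -hprob mulrAC divff // mul1r.
Qed.
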